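(* Let $S$ be a Stone relation algebra and $x,y,z\in S$. Then: 1. $x$ is an ideal if and only if $\top x\top=x$. 2. If $x$ and $z$ are vectors, then $x^{\smile}yz$ is an ideal. 3. The set $\mathrm{I}(S)$ of ideals is closed under $\cdot$, $\sqcup$, $\sqcap$, converse and pseudocomplement. 4. $\bot$ and $\top$ are ideals. 5. If $x$ and $y$ are ideals, then $xy=x\sqcap y$. 6. $\mathrm{I}(S)$, with $\sqcup,\sqcap$, pseudocomplement, converse, $\bot,\top$ restricted from $S$, with $\sqcap$ as composition and $\top$ as identity, is a Stone relation algebra. 7. If $x$ is an ideal, then $x=x^{\smile}$. 8. If $x$ is an ideal, then $yz\sqcap x=(y\sqcap x)(z\sqcap x)$.
   Context: A Stone relation algebra is a structure $(S,\sqcup,\sqcap,\cdot,\overline{\,\cdot\,},{}^{\smile},\bot,\top,1)$ (write $xy$ for $x\cdot y$, $\overline{x}$ for the pseudocomplement, $x^{\smile}$ for the converse) such that: $(S,\sqcup,\sqcap,\bot,\top)$ is a bounded distributive lattice with order $x\sqsubseteq y\iff x\sqcup y=y$; $x\sqcap y=\bot\iff x\sqsubseteq\overline{y}$; $\overline{x}\sqcup\overline{\overline{x}}=\top$; $\cdot$ is associative with two-sided unit $1$, distributes over $\sqcup$ on both sides, and $\bot$ is a zero of $\cdot$; $x^{\smile\smile}=x$, $(xy)^{\smile}=y^{\smile}x^{\smile}$, $(x\sqcup y)^{\smile}=x^{\smile}\sqcup y^{\smile}$; $\overline{\overline{1}}=1$; $\overline{\overline{xy}}=\overline{\overline{x}}\,\overline{\overline{y}}$;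 $xy\sqcap z\sqsubseteq x(y\sqcap x^{\smile}z)$. $x$ is a vector if $x\top=x$, a covector if $\top x=x$, and an ideal if it is both a vector and a covector. *)

(* Defs.v *)
Set Implicit Arguments.

(* With P := fun _ => True this is exactly the definition of a Stone relation
   algebra on T; with general P it says that P, with the restricted
   operations, forms a Stone relation algebra. *)
Definition StoneRA_on (T : Type) (P : T -> Prop)
  (join meet comp : T -> T -> T) (pc conv : T -> T) (bot top one : T) : Prop :=
  let le x y := join x y = y in
  (forall x y, P x -> P y -> P (join x y)) /\
  (forall x y, P x -> P y -> P (meet x y)) /\
  (forall x y, P x -> P y -> P (comp x y)) /\
  (forall x, P x -> P (pc x)) /\
  (forall x, P x -> P (conv x)) /\
  P bot /\ P top /\ P one /\
  (forall x y z, P x -> P y -> P z -> join x (join y z) = join (join x y) z) /\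
  (forall x y z, P x -> P y -> P z -> meet x (meet y z) = meet (meet x y) z) /\
  (forall x y, P x -> P y -> join x y = join y x) /\
  (forall x y, P x -> P y -> meet x y = meet y x) /\
  (forall x, P x -> join x x = x) /\
  (forall x, P x -> meet x x = x) /\
  (forall x y, P x -> P y -> join x (meet x y) = x) /\
  (forall x y, P x -> P y -> meet x (join x y) = x) /\
  (forall x y z, P x -> P y -> P z ->
     meet x (join y z) = join (meet x y) (meet x z)) /\
  (forall x, P x -> join bot x = x) /\
  (forall x, P x -> meet top x = x) /\
  (forall x y, P x -> P y -> (meet x y = bot <-> le x (pc y))) /\
  (forall x, P x -> join (pc x) (pc (pc x)) = top) /\
  (forall x y z, P x -> P y -> P z -> comp x (comp y z) = comp (comp x y) z) /\
  (forall x, P x -> comp one x = x) /\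
  (forall x, P x -> comp x one = x) /\
  (forall x y z, P x -> P y -> P z -> comp x (join y z) = join (comp x y) (comp x z)) /\
  (forall x y z, P x -> P y -> P z -> comp (join x y) z = join (comp x z) (comp y z)) /\
  (forall x, P x -> comp bot x = bot) /\
  (forall x, P x -> comp x bot = bot) /\
  (forall x, P x -> conv (conv x) = x) /\
  (forall x y, P x -> P y -> conv (comp x y) = comp (conv y) (conv x)) /\
  (forall x y, P x -> P y -> conv (join x y) = join (conv x) (conv y)) /\
  pc (pc one) = one /\
  (forall x y, P x -> P y -> pc (pc (comp x y)) = comp (pc (pc x)) (pc (pc y))) /\
  (forall x y z, P x -> P y -> P z ->
     le (meet (comp x y) z) (comp x (meet y (comp (conv x) z)))).

Record StoneRA := {
  carrier :> Type;
  sjoin : carrier -> carrier -> carrier;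
  smeet : carrier -> carrier -> carrier;
  scomp : carrier -> carrier -> carrier;
  spc : carrier -> carrier;
  sconv : carrier -> carrier;
  sbot : carrier;
  stop : carrier;
  sone : carrier;
  stone_axioms : StoneRA_on (fun _ => True) sjoin smeet scomp spc sconv sbot stop sone
}.

Arguments sjoin {s}. Arguments smeet {s}. Arguments scomp {s}.
Arguments spc {s}. Arguments sconv {s}. Arguments sbot {s}.
Arguments stop {s}. Arguments sone {s}.

Definition vector {S : StoneRA} (x : S) : Prop := scomp x stop = x.
Definition covector {S : StoneRA} (x : S) : Prop := scomp stop x = x.
Definition ideal {S : StoneRA} (x : S) : Prop := vector x /\ covector x.

(* Main.v *)
Require Import Defs.
From Stdlib Require Import Setoid.

Ltac ax S := destruct (stone_axioms S) as (Cj & Cm & Cc & Cp & Cv & Cb & Ct & Co & JA & MA & JC & MC & JI & MI & JAb & MAb & Dis & JB & MT & PC & ST & CA & C1l & C1r & CDl & CDr & CBl & CBr & VV & VC & VJ & P1 & PP & DED).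

Definition le {S : StoneRA} (x y : S) := sjoin x y = y.

Section L.
Lemma jA {S : StoneRA} (x y z : S) : sjoin x (sjoin y z) = sjoin (sjoin x y) z. Proof. ax S; now apply JA. Qed.
Lemma mA {S : StoneRA} (x y z : S) : smeet x (smeet y z) = smeet (smeet x y) z. Proof. ax S; now apply MA. Qed.
Lemma jC {S : StoneRA} (x y : S) : sjoin x y = sjoin y x. Proof. ax S; now apply JC. Qed.
Lemma mC {S : StoneRA} (x y : S) : smeet x y = smeet y x. Proof. ax S; now apply MC. Qed.
Lemma jI {S : StoneRA} (x : S) : sjoin x x = x. Proof. ax S; now apply JI. Qed.
Lemma mI {S : StoneRA} (x : S) : smeet x x = x. Proof. ax S; now apply MI. Qed.
Lemma jAb {S : StoneRA} (x y : S) : sjoin x (smeet x y) = x. Proof. ax S; now apply JAb. Qed.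
Lemma mAb {S : StoneRA} (x y : S) : smeet x (sjoin x y) = x. Proof. ax S; now apply MAb. Qed.
Lemma dis {S : StoneRA} (x y z : S) : smeet x (sjoin y z) = sjoin (smeet x y) (smeet x z). Proof. ax S; now apply Dis. Qed.
Lemma jB {S : StoneRA} (x : S) : sjoin sbot x = x. Proof. ax S; now apply JB. Qed.
Lemma mT {S : StoneRA} (x : S) : smeet stop x = x. Proof. ax S; now apply MT. Qed.
Lemma pcS {S : StoneRA} (x y : S) : smeet x y = sbot <-> le x (spc y). Proof. ax S; now apply PC. Qed.
Lemma stn {S : StoneRA} (x : S) : sjoin (spc x) (spc (spc x)) = stop. Proof. ax S; now apply ST. Qed.
Lemma cA {S : StoneRA} (x y z : S) : scomp x (scomp y z) = scomp (scomp x y) z. Proof. ax S; now apply CA. Qed.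
Lemma c1l {S : StoneRA} (x : S) : scomp sone x = x. Proof. ax S; now apply C1l. Qed.
Lemma c1r {S : StoneRA} (x : S) : scomp x sone = x. Proof. ax S; now apply C1r. Qed.
Lemma cDl {S : StoneRA} (x y z : S) : scomp x (sjoin y z) = sjoin (scomp x y) (scomp x z). Proof. ax S; now apply CDl. Qed.
Lemma cDr {S : StoneRA} (x y z : S) : scomp (sjoin x y) z = sjoin (scomp x z) (scomp y z). Proof. ax S; now apply CDr. Qed.
Lemma cBl {S : StoneRA} (x : S) : scomp sbot x = sbot. Proof. ax S; now apply CBl. Qed.
Lemma cBr {S : StoneRA} (x : S) : scomp x sbot = sbot. Proof. ax S; now apply CBr. Qed.
Lemma vv {S : StoneRA} (x : S) : sconv (sconv x) = x. Proof. ax S; now apply VV. Qed.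
Lemma vc {S : StoneRA} (x y : S) : sconv (scomp x y) = scomp (sconv y) (sconv x). Proof. ax S; now apply VC. Qed.
Lemma vj {S : StoneRA} (x y : S) : sconv (sjoin x y) = sjoin (sconv x) (sconv y). Proof. ax S; now apply VJ. Qed.
Lemma pp {S : StoneRA} (x y : S) : spc (spc (scomp x y)) = scomp (spc (spc x)) (spc (spc y)). Proof. ax S; now apply PP. Qed.
Lemma ded {S : StoneRA} (x y z : S) : le (smeet (scomp x y) z) (scomp x (smeet y (scomp (sconv x) z))). Proof. ax S; now apply DED. Qed.

Lemma le_refl {S : StoneRA} (x : S) : le x x. Proof. apply jI. Qed.
Lemma le_trans {S : StoneRA} (x y z : S) : le x y -> le y z -> le x z.
Proof. unfold le; intros H1 H2. rewrite <- H2, jA, H1. reflexivity. Qed.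
Lemma le_anti {S : StoneRA} (x y : S) : le x y -> le y x -> x = y.
Proof. unfold le; intros H1 H2. rewrite <- H1, jC. symmetry; exact H2. Qed.
Lemma le_meet {S : StoneRA} (x y : S) : le x y <-> smeet x y = x.
Proof. unfold le; split; intro H.
 - rewrite <- H, mAb. reflexivity.
 - rewrite <- H, jC, mC, jAb. reflexivity. Qed.
Lemma meet_l {S : StoneRA} (x y : S) : le (smeet x y) x.
Proof. apply le_meet. rewrite mC, mA, mI. reflexivity. Qed.
Lemma meet_r {S : StoneRA} (x y : S) : le (smeet x y) y.
Proof. rewrite mC. apply meet_l. Qed.
Lemma meet_glb {S : StoneRA} (x y z : S) : le z x -> le z y -> le z (smeet x y).
Proof. rewrite !le_meet. intros H1 H2. rewrite mA, H1, H2. reflexivity. Qed.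
Lemma join_l {S : StoneRA} (x y : S) : le x (sjoin x y).
Proof. unfold le. rewrite jA, jI. reflexivity. Qed.
Lemma join_r {S : StoneRA} (x y : S) : le y (sjoin x y).
Proof. rewrite jC. apply join_l. Qed.
Lemma join_lub {S : StoneRA} (x y z : S) : le x z -> le y z -> le (sjoin x y) z.
Proof. unfold le. intros H1 H2. rewrite <- jA, H2, H1. reflexivity. Qed.
Lemma le_top {S : StoneRA} (x : S) : le x stop.
Proof. apply le_meet. rewrite mC, mT. reflexivity. Qed.
Lemma bot_le {S : StoneRA} (x : S) : le sbot x.
Proof. apply jB. Qed.
Lemma le_bot {S : StoneRA} (x : S) : le x sbot -> x = sbot.
Proof. intro H. apply le_anti; auto using bot_le. Qed.
Lemma meet_mono {S : StoneRA} (a b c d : S) : le a b -> le c d -> le (smeet a c) (smeet b d).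
Proof. intros. apply meet_glb; [eapply le_trans; [apply meet_l|] | eapply le_trans; [apply meet_r|]]; auto. Qed.
Lemma comp_mono_r {S : StoneRA} (x y z : S) : le x y -> le (scomp z x) (scomp z y).
Proof. unfold le. intro H. rewrite <- cDl, H. reflexivity. Qed.
Lemma comp_mono_l {S : StoneRA} (x y z : S) : le x y -> le (scomp x z) (scomp y z).
Proof. unfold le. intro H. rewrite <- cDr, H. reflexivity. Qed.
Lemma comp_mono {S : StoneRA} (a b c d : S) : le a b -> le c d -> le (scomp a c) (scomp b d).
Proof. intros. eapply le_trans. apply comp_mono_l; eauto. apply comp_mono_r; auto. Qed.
Lemma conv_mono {S : StoneRA} (x y : S) : le x y -> le (sconv x) (sconv y).
Proof. unfold le. intro H. rewrite <- vj, H. reflexivity. Qed.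
Lemma conv_bot {S : StoneRA} : sconv (@sbot S) = sbot.
Proof. apply le_bot. rewrite <- (vv sbot) at 2. apply conv_mono, bot_le. Qed.
Lemma conv_top {S : StoneRA} : sconv (@stop S) = stop.
Proof. apply le_anti. apply le_top. rewrite <- (vv stop) at 1. apply conv_mono, le_top. Qed.
Lemma conv_meet {S : StoneRA} (x y : S) : sconv (smeet x y) = smeet (sconv x) (sconv y).
Proof. apply le_anti.
 - apply meet_glb; apply conv_mono; [apply meet_l | apply meet_r].
 - rewrite <- (vv (smeet (sconv x) (sconv y))). apply conv_mono.
   apply meet_glb; [rewrite <- (vv x) at 2 | rewrite <- (vv y) at 2]; apply conv_mono;
   [apply meet_l | apply meet_r]. Qed.
Lemma ded2 {S : StoneRA} (x y z : S) : le (smeet (scomp x y) z) (scomp (smeet x (scomp z (sconv y))) y).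
Proof.
 rewrite <- (vv (smeet (scomp x y) z)).
 rewrite <- (vv (scomp (smeet x (scomp z (sconv y))) y)).
 apply conv_mono. rewrite conv_meet, !vc, conv_meet, vc.
 pose proof (ded (sconv y) (sconv x) (sconv z)) as H. rewrite vv in H. rewrite vv. exact H. Qed.
Lemma top_top {S : StoneRA} : scomp (@stop S) stop = stop.
Proof. apply le_anti. apply le_top. rewrite <- (c1l stop) at 1. apply comp_mono_l, le_top. Qed.
Lemma le_tx {S : StoneRA} (x : S) : le x (scomp stop x).
Proof. rewrite <- (c1l x) at 1. apply comp_mono_l, le_top. Qed.
Lemma le_xt {S : StoneRA} (x : S) : le x (scomp x stop).
Proof. rewrite <- (c1r x) at 1. apply comp_mono_r, le_top. Qed.
Lemma le_xcx {S : StoneRA} (x : S) : le x (scomp x (scomp (sconv x) x)).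
Proof.
 eapply le_trans; [| eapply le_trans; [apply (ded x sone x)|]].
 - rewrite c1r. apply meet_glb; apply le_refl.
 - apply comp_mono_r, meet_r. Qed.

Lemma vec_le {S : StoneRA} (x a : S) : scomp x stop = x -> le (scomp x a) x.
Proof. intro H. eapply le_trans. apply comp_mono_r, (le_top a). rewrite H. apply le_refl. Qed.
Lemma cov_le {S : StoneRA} (x a : S) : scomp stop x = x -> le (scomp a x) x.
Proof. intro H. eapply le_trans. apply comp_mono_l, (le_top a). rewrite H. apply le_refl. Qed.
Lemma ideal_conv {S : StoneRA} (x : S) : ideal x -> ideal (sconv x).
Proof. intros [H1 H2]. split; unfold vector, covector in *.
 - rewrite <- conv_top, <- vc, H2. reflexivity.
 - rewrite <- conv_top at 1. rewrite <- vc, H1. reflexivity. Qed.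
Lemma ideal_sym {S : StoneRA} (x : S) : ideal x -> x = sconv x.
Proof.
 assert (K : forall y : S, ideal y -> le y (sconv y)).
 { intros y Hy. pose proof (ideal_conv y Hy) as [V C].
   destruct Hy as [V0 C0]. unfold vector, covector in *.
   eapply le_trans. apply le_xcx.
   eapply le_trans. apply comp_mono. apply le_top. apply comp_mono_r. apply le_top.
   rewrite V, C. apply le_refl. }
 intro H. apply le_anti. apply K; auto.
 rewrite <- (vv x) at 2. apply K. apply ideal_conv; auto. Qed.
Lemma ideal_comp_meet {S : StoneRA} (x y : S) : ideal x -> ideal y -> scomp x y = smeet x y.
Proof. intros Hx Hy. pose proof (ideal_sym y Hy) as E.
 destruct Hx as [Vx Cx]; destruct Hy as [Vy Cy]; unfold vector, covector in *.
 apply le_anti.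
 - apply meet_glb. rewrite <- Vx at 2. apply comp_mono_r, le_top.
   rewrite <- Cy at 2. apply comp_mono_l, le_top.
 - rewrite mC. rewrite <- Cy at 1. eapply le_trans. apply ded2.
   rewrite <- E, mT, <- cA. apply comp_mono_r. apply cov_le; auto. Qed.
Lemma ideal_pc {S : StoneRA} (u : S) : ideal u -> ideal (spc u).
Proof. intros [V C]; unfold ideal, vector, covector in *. split; apply le_anti.
 - apply pcS. apply le_bot. eapply le_trans. apply ded2.
   rewrite conv_top, V. rewrite (proj2 (pcS (spc u) u) (le_refl _)), cBl. apply le_refl.
 - apply le_xt.
 - apply pcS. apply le_bot. eapply le_trans. apply ded.
   rewrite conv_top, C. rewrite (proj2 (pcS (spc u) u) (le_refl _)), cBr. apply le_refl.
 - apply le_tx. Qed.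
Lemma ideal_meet {S : StoneRA} (u v : S) : ideal u -> ideal v -> ideal (smeet u v).
Proof. intros [V C] [V' C']; unfold ideal, vector, covector in *. split; apply le_anti.
 - apply meet_glb. eapply le_trans. apply comp_mono_l, meet_l. rewrite V; apply le_refl.
   eapply le_trans. apply comp_mono_l, meet_r. rewrite V'; apply le_refl.
 - apply le_xt.
 - apply meet_glb. eapply le_trans. apply comp_mono_r, meet_l. rewrite C; apply le_refl.
   eapply le_trans. apply comp_mono_r, meet_r. rewrite C'; apply le_refl.
 - apply le_tx. Qed.
Lemma ideal_join {S : StoneRA} (u v : S) : ideal u -> ideal v -> ideal (sjoin u v).
Proof. intros [V C] [V' C']; unfold ideal, vector, covector in *. split.
 - rewrite cDr, V, V'. reflexivity.
 - rewrite cDl, C, C'. reflexivity. Qed.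
Lemma ideal_comp {S : StoneRA} (u v : S) : ideal u -> ideal v -> ideal (scomp u v).
Proof. intros [V C] [V' C']; unfold ideal, vector, covector in *. split.
 - rewrite <- cA, V'. reflexivity.
 - rewrite cA, C. reflexivity. Qed.
Lemma ideal_top {S : StoneRA} : @ideal S stop.
Proof. split; apply top_top. Qed.
Lemma ideal_bot {S : StoneRA} : @ideal S sbot.
Proof. split; [apply cBl | apply cBr]. Qed.
Lemma meet_bot {S : StoneRA} (x : S) : smeet x sbot = sbot.
Proof. apply le_bot, meet_r. Qed.
Lemma pc_top {S : StoneRA} : spc (@stop S) = sbot.
Proof. pose proof (proj2 (pcS (spc (@stop S)) stop) (le_refl _)). rewrite mC, mT in H. exact H. Qed.
Lemma pc_bot {S : StoneRA} : spc (@sbot S) = stop.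
Proof. apply le_anti. apply le_top. apply pcS. apply meet_bot. Qed.
End L.

Theorem mainTheorem10 (S : StoneRA) (x y z : S) :
  (* 1 *) (ideal x <-> scomp (scomp stop x) stop = x) /\
  (* 2 *) (vector x -> vector z -> ideal (scomp (scomp (sconv x) y) z)) /\
  (* 3 *) (forall u v : S, ideal u -> ideal v ->
             ideal (scomp u v) /\ ideal (sjoin u v) /\ ideal (smeet u v) /\
             ideal (sconv u) /\ ideal (spc u)) /\
  (* 4 *) (@ideal S sbot /\ @ideal S stop) /\
  (* 5 *) (ideal x -> ideal y -> scomp x y = smeet x y) /\
  (* 6 *) StoneRA_on (@ideal S) sjoin smeet smeet spc sconv sbot stop stop /\
  (* 7 *) (ideal x -> x = sconv x) /\
  (* 8 *) (ideal x -> smeet (scomp y z) x = scomp (smeet y x) (smeet z x)).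
Proof.
  split; [|split; [|split; [|split; [|split; [|split; [|split]]]]]].
  - split.
    + intros [V C]. unfold vector, covector in *. rewrite C, V. reflexivity.
    + intro H. split; unfold vector, covector.
      * rewrite <- H at 1. rewrite <- cA, top_top. exact H.
      * rewrite <- H at 1. rewrite !cA, top_top. exact H.
  - intros V V'. unfold ideal, vector, covector in *. split.
    + rewrite <- cA, V'. reflexivity.
    + rewrite !cA. rewrite <- conv_top at 1. rewrite <- vc, V. reflexivity.
  - intros u v Hu Hv. repeat split; try apply ideal_comp; try apply ideal_join;
      try apply ideal_meet; try apply (ideal_conv u Hu); try apply (ideal_pc u Hu); auto.
  - split; [apply ideal_bot | apply ideal_top].
  - apply ideal_comp_meet.
  - unfold StoneRA_on; cbv zeta.
    repeat split; intros.
    all: try (apply ideal_join; assumption).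
    all: try (apply ideal_meet; assumption).
    all: try (apply ideal_pc; assumption).
    all: try (apply ideal_conv; assumption).
    all: try apply ideal_bot.
    all: try apply ideal_top.
    all: try apply jA. all: try apply mA. all: try apply jC. all: try apply mC.
    all: try apply jI. all: try apply mI. all: try apply jAb. all: try apply mAb.
    all: try apply dis. all: try apply jB. all: try apply mT.
    all: try apply stn. all: try apply vv. all: try apply vj.
    all: try (apply pcS; assumption).
    all: try (rewrite mC; apply mT).
    all: try (rewrite mC, dis, (mC z0 x0), (mC z0 y0); reflexivity).
    all: try (rewrite mC; apply meet_bot).
    all: try apply meet_bot.
    all: try (rewrite pc_top, pc_bot; reflexivity).
    all: try (match goal with Hx: ideal ?a, Hy: ideal ?b |- sconv (smeet ?a ?b) = _ =>
       rewrite <- (ideal_sym _ (ideal_meet _ _ Hx Hy)), <- (ideal_sym _ Hx), <- (ideal_sym _ Hy); apply mC end).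
    all: try (match goal with Hx: ideal ?a, Hy: ideal ?b |- spc (spc (smeet ?a ?b)) = _ =>
       rewrite <- (ideal_comp_meet _ _ Hx Hy), pp;
       apply (ideal_comp_meet _ _ (ideal_pc _ (ideal_pc _ Hx)) (ideal_pc _ (ideal_pc _ Hy))) end).
    all: try (match goal with Hx: ideal ?a |- sjoin ?A ?B = ?B =>
       change (le A B); rewrite <- (ideal_sym _ Hx);
       assert (L1 : le (smeet (smeet a y0) z0) a) by (eapply le_trans; apply meet_l);
       assert (L2 : le (smeet (smeet a y0) z0) y0) by (eapply le_trans; [apply meet_l | apply meet_r]);
       apply meet_glb; [exact L1 | apply meet_glb; [exact L2 | apply meet_glb; [exact L1 | apply meet_r]]] end).
  - apply ideal_sym.
  - intro Hx. pose proof Hx as [V C]. unfold vector, covector in *. apply le_anti.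
    + eapply le_trans. apply (meet_glb (scomp y (smeet z x)) x).
      * eapply le_trans. apply ded. apply comp_mono_r, meet_mono. apply le_refl.
        apply cov_le; auto.
      * apply meet_r.
      * eapply le_trans. apply ded2. apply comp_mono_l, meet_mono. apply le_refl.
        apply vec_le; auto.
    + apply meet_glb. apply comp_mono; apply meet_l.
      eapply le_trans. apply comp_mono_l, meet_r. apply vec_le; auto.
Qed.
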